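(* Let $\tau\subset\mathbb{Z}^n_{\ge0}$ be a B-facet which contains a standard basis vector $e_i$ (the point with $i$-th coordinate $1$ and all others $0$). Then $\tau$ is a $B_1$-facet: every point of $\tau$ other than $e_i$ has $i$-th coordinate $0$.
   Context: A $k$-simplex is a set of $k+1$ affinely independent points. A $k$-simplex $S\subset\mathbb{Z}^n_{\ge0}$ is a B-simplex if there is a coordinate index $i$ such that exactly $k$ of its vertices lie in $\{x_i=0\}$ and the remaining vertex has $i$-th coordinate $1$. A B-facet in $\mathbb{Z}^n_{\ge0}$ is a finite set $\tau\subset\mathbb{Z}^n_{\ge 0}$ whose affine span is a hyperplane $\{x:\langle a,x\rangle=b\}$ with all $a_j>0$, such that every $(n-1)$-simplex with vertices in $\tau$ is a B-simplex. A $B_1$-facet is one for which there is an index $i$ such that exactly one point of $\tau$ has nonzero $i$-th coordinate, that coordinate being $1$. *)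

(* Defs.v *)
From HB Require Import structures.
From mathcomp Require Import all_boot all_order all_algebra.
From mathcomp Require Import reals.
Set Implicit Arguments. Unset Strict Implicit. Unset Printing Implicit Defensive.
Import Order.TTheory GRing.Theory Num.Theory.
Local Open Scope ring_scope.

Definition pt (n : nat) := {ffun 'I_n -> nat}.

Definition e_vec (n : nat) (i : 'I_n) : pt n := [ffun j => nat_of_bool (j == i)].

Definition vecR (R : realType) (n : nat) (x : pt n) : 'rV[R]_n :=
  \row_j ((x j)%:R).

Definition aff_indep (R : realType) (n : nat) (S : seq (pt n)) : Prop :=
  uniq S /\
  forall c : pt n -> R,
    \sum_(v <- S) c v = 0 ->
    \sum_(v <- S) c v *: vecR R v = 0 ->
    forall v, v \in S -> c v = 0.

Definition B_simplex (R : realType) (n : nat) (S : seq (pt n)) : Prop :=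
  aff_indep R S /\
  exists i : 'I_n,
    count (fun v : pt n => v i == 0%N) S = (size S).-1 /\
    exists2 w, w \in S & w i = 1%N.

Definition in_aff_span (R : realType) (n : nat) (tau : seq (pt n)) (x : 'rV[R]_n) : Prop :=
  exists c : pt n -> R,
    \sum_(v <- tau) c v = 1 /\ x = \sum_(v <- tau) c v *: vecR R v.

Definition B_facet (R : realType) (n : nat) (tau : seq (pt n)) : Prop :=
  (exists (a : 'I_n -> R) (b : R),
      (forall j, 0 < a j) /\
      forall x : 'rV[R]_n, in_aff_span tau x <-> \sum_j a j * x 0 j = b) /\
  (forall S : seq (pt n),
      {subset S <= tau} -> size S = n -> aff_indep R S -> B_simplex R S).

Definition B1_facet (R : realType) (n : nat) (tau : seq (pt n)) : Prop :=
  B_facet R tau /\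
  exists i : 'I_n, exists2 p, p \in tau &
    p i = 1%N /\ forall q, q \in tau -> q i <> 0%N -> q = p.

(* Main.v *)
Require Import Defs.
From HB Require Import structures.
From mathcomp Require Import all_boot all_order all_algebra.
From mathcomp Require Import reals.
From mathcomp Require Import lra.
Set Implicit Arguments. Unset Strict Implicit. Unset Printing Implicit Defensive.
Import Order.TTheory GRing.Theory Num.Theory.
Local Open Scope ring_scope.

Lemma sum_ifeq (n : nat) (V : nmodType) (s : seq (pt n)) (p : pt n) (x : V) :
  \sum_(v <- s) (if v == p then x else 0) = x *+ count_mem p s.
Proof.
elim: s => [|a s IH]; first by rewrite big_nil.
rewrite big_cons IH /= eq_sym; case: (p == a) => /=.
  by rewrite mulrS.
by rewrite add0r add0n.
Qed.

Lemma span_pt (R : realType) (n : nat) (tau : seq (pt n)) (p : pt n) :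
  p \in tau -> in_aff_span tau (vecR R p).
Proof.
move=> pin.
have kpos : (0 < count_mem p tau)%N.
  rewrite -has_count; apply/hasP; exists p => //=.
have kne : (count_mem p tau)%:R != 0 :> R by rewrite pnatr_eq0 -lt0n kpos.
exists (fun v => if v == p then (count_mem p tau)%:R^-1 else 0); split.
  by rewrite sum_ifeq -[_ *+ _]mulr_natr mulVf.
rewrite (eq_bigr (fun v => if v == p then (count_mem p tau)%:R^-1 *: vecR R p else 0)).
  by rewrite sum_ifeq scalerMnl -[_ *+ _]mulr_natr mulVf // scale1r.
by move=> v _; case: eqP => [->|_] //; rewrite scale0r.
Qed.

Lemma key_lem (R : realType) (n : nat) (a : 'I_n -> R) (i : 'I_n) (x : pt n) :
  (forall j, 0 < a j) -> \sum_j a j * (x j)%:R = a i -> x i <> 0%N -> x = e_vec i.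
Proof.
move=> apos E0 xi0.
move: E0; rewrite (bigD1 i) //=.
  set S := \sum_(j < n | j != i) _.
  have S0 : 0 <= S by apply: sumr_ge0 => j _; rewrite mulr_ge0 // ltW.
  have xi1 : 1 <= (x i)%:R :> R by rewrite ler1n lt0n; apply/eqP.
  have ai1 : a i <= a i * (x i)%:R by rewrite ler_peMr // ltW.
  move=> E.
  have Sz : S = 0 by apply/eqP; rewrite eq_le S0 andbT; lra.
  have xi : x i = 1%N.
    have : (x i)%:R = 1%:R :> R.
      by apply: (mulfI (lt0r_neq0 (apos i))); rewrite mulr1; lra.
    by move/eqP; rewrite eqr_nat => /eqP.
  have Z := (psumr_eq0P (fun j _ => mulr_ge0 (ltW (apos j)) (ler0n R (x j))) Sz).
  apply/ffunP => j; rewrite /e_vec ffunE; case: eqP => [->|/eqP ji]; first by rewrite xi.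
  have := Z j ji; move/eqP; rewrite mulf_eq0 (negbTE (lt0r_neq0 (apos j))) /= pnatr_eq0.
  by move/eqP.
Qed.

Theorem claim2p5 (R : realType) (n : nat) (tau : seq (pt n)) (i : 'I_n) :
  B_facet R tau -> e_vec i \in tau ->
  B1_facet R tau /\
  (forall x, x \in tau -> x != e_vec i -> x i = 0%N).
Proof.
move=> Hf ein.
have Hf' := Hf; case: Hf' => [[a [b [apos Hab]]] _].
have Hp : forall p, p \in tau -> \sum_j a j * (p j)%:R = b.
  move=> p pin; have := (Hab (vecR R p)).1 (span_pt R pin).
  by under eq_bigr do rewrite /vecR mxE.
have Hb : b = a i.
  rewrite -(Hp _ ein) (bigD1 i) //= big1 ?addr0.
    by rewrite /e_vec ffunE eqxx mulr1.
  by move=> j ji; rewrite /e_vec ffunE (negbTE ji) mulr0.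
have key : forall x, x \in tau -> x i <> 0%N -> x = e_vec i.
  by move=> x xin; apply: (key_lem apos); rewrite -Hb Hp.
split.
  split; first exact: Hf. exists i; exists (e_vec i); first exact: ein. split.
    by rewrite /e_vec ffunE eqxx.
  exact: key.
move=> x xin xne; case: (x i =P 0%N) => // /(key _ xin) xe.
by case/eqP: xne.
Qed.
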